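(* Let $H=(E,\{X_i:i\in[n]\})$ be a hypergraph such that $|X_i\cap X_j|\le1$ for all distinct $i,j\in[n]$, the line graph $G_H$ is complete, and for all distinct $p,q\in[n]$ there are elements $a\in X_p$ and $b\in X_q$ such that no $i\in[n]$ has $\{a,b\}\subseteq X_i$. Let $\rho(A)=\sum_{i=1}^n\min\{|A\cap X_i|,1\}$ for $A\subseteq E$. Let $\sigma$ be any polymatroid on $E$ with $\sigma(A)=\rho(A)$ whenever either $|A|\le2$, or $|A|=3$ and $A\subseteq X_i$ for some $i\in[n]$. If $\sigma(E)<n$, then $\sigma$ is indecomposable. In particular, the truncation $T(\rho,s)$ is indecomposable whenever $$\max\{\rho(A): |A|\le2\text{ or }A\text{ is a }3\text{-element subset of a hyperedge}\}\le s<n.$$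
   Context: A polymatroid on a finite set $E$ is a function $\rho:2^E\to\mathbb{Z}$ that is normalized, non-decreasing and submodular. A hypergraph is $H=(E,\mathcal{E})$ with $E$ finite and $\mathcal{E}=\{X_i:i\in[n]\}$ a set of nonempty subsets of $E$. The line graph $G_H$ has vertex set $[n]$ with $ij$ an edge iff $i\ne j$ and $X_i\cap X_j\ne\emptyset$. A polymatroid is indecomposable if it cannot be written as a sum $r_{M_1}+\cdots+r_{M_k}$ of rank functions of matroids on its ground set for any $k$. The truncation $T(\rho,s)$ is the polymatroid $X\mapsto\min\{\rho(X),s\}$. *)

(* Defs.v *)
From mathcomp Require Import all_boot all_order all_algebra.
Set Implicit Arguments. Unset Strict Implicit. Unset Printing Implicit Defensive.
Import GRing.Theory Num.Theory.
Local Open Scope ring_scope.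

Definition polymatroid (E : finType) (rho : {set E} -> int) : Prop :=
  [/\ rho set0 = 0,
      (forall A B : {set E}, A \subset B -> rho A <= rho B) &
      (forall A B : {set E}, rho (A :|: B) + rho (A :&: B) <= rho A + rho B)].

Definition matroid_rank (E : finType) (r : {set E} -> int) : Prop :=
  polymatroid r /\ (forall A : {set E}, r A <= (#|A|)%:Z).

Definition indecomposable (E : finType) (rho : {set E} -> int) : Prop :=
  ~ exists (k : nat) (M : 'I_k -> {set E} -> int),
      (forall i, matroid_rank (M i)) /\
      (forall A : {set E}, rho A = \sum_(i < k) M i A).

Definition truncation (E : finType) (rho : {set E} -> int) (s : int)
  : {set E} -> int := fun X => Num.min (rho X) s.

Definition hyp_rho (E : finType) (n : nat) (X : 'I_n -> {set E})
  : {set E} -> int := fun A => \sum_(i < n) (minn #|A :&: X i| 1)%:Z.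

Definition small_set (E : finType) (n : nat) (X : 'I_n -> {set E})
  (A : {set E}) : Prop :=
  (#|A| <= 2)%N \/ (#|A| = 3 /\ exists i, A \subset X i).

(* Main.v *)
Require Import Defs.
From mathcomp Require Import all_boot all_order all_algebra.
From mathcomp Require Import zify ring lra.
Import GRing.Theory Num.Theory Order.TTheory.
Local Open Scope ring_scope.

Ltac glia := repeat (match goal with H : _ |- _ => clear H end); lia.

Section Mat.
Variable E : finType.
Variable r : {set E} -> int.
Hypothesis Hr : matroid_rank r.

Lemma r0 : r set0 = 0. Proof. by case: Hr => [[]]. Qed.
Lemma rmono (A B : {set E}) : A \subset B -> r A <= r B. Proof. by case: Hr => [[_ H _]] _; apply: H. Qed.
Lemma rsub (A B : {set E}) : r (A :|: B) + r (A :&: B) <= r A + r B. Proof. by case: Hr => [[_ _ H]]. Qed.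
Lemma rge0 (A : {set E}) : 0 <= r A. Proof. rewrite -r0; apply: rmono; exact: sub0set. Qed.
Lemma r1le x : r [set x] <= 1.
Proof. by case: Hr => _ H; have := H [set x]; rewrite cards1. Qed.
Lemma rsubadd (A B : {set E}) : r (A :|: B) <= r A + r B.
Proof. have := rsub A B; have := rge0 (A :&: B); lia. Qed.
Lemma tri_le (A B T : {set E}) : T \subset A :|: B -> r T <= r A + r B.
Proof. move=> H; have := @rmono _ _ H; have := rsubadd A B; lia. Qed.
Lemma r2 x y : r [set x; y] <= r [set x] + r [set y].
Proof. exact: rsubadd. Qed.
Lemma par_def x y : 1 <= r [set x] + r [set y] - r [set x; y] ->
  [/\ r [set x] = 1, r [set y] = 1 & r [set x; y] <= 1].
Proof.
move=> H.
have h1 : r [set x] <= r [set x; y] by apply: rmono; apply: subsetUl.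
have h2 : r [set y] <= r [set x; y] by apply: rmono; apply: subsetUr.
have := r1le x; have := r1le y; have := rge0 [set x]; have := rge0 [set y].
move=> *; split; lia.
Qed.
Lemma par_trans a b c : r [set c] = 1 -> r [set a; c] <= 1 -> r [set c; b] <= 1 ->
  r [set a; b] <= 1.
Proof.
move=> hc hac hcb; have := rsub [set a; c] [set c; b].
have h1 : r [set c] <= r ([set a; c] :&: [set c; b]).
  by apply: rmono; rewrite subsetI !sub1set !inE !eqxx !orbT.
have h2 : r [set a; b] <= r ([set a; c] :|: [set c; b]).
  by apply: rmono; apply/subsetP => v; rewrite !inE => /orP[]->; rewrite ?orbT.
lia.
Qed.
End Mat.
Arguments r0 {E r}.
Arguments rmono {E r} Hr {A B}.
Arguments rsub {E r}.
Arguments rge0 {E r}.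
Arguments r1le {E r}.
Arguments rsubadd {E r}.
Arguments tri_le {E r} Hr {A B T}.
Arguments r2 {E r}.
Arguments par_def {E r} Hr {x y}.
Arguments par_trans {E r} Hr {a b c}.

Lemma sum_ge1 k (F : 'I_k -> int) a : (forall i, 0 <= F i) -> F a <= \sum_i F i.
Proof.
move=> H; rewrite (bigD1 a) //= lerDl; exact: sumr_ge0.
Qed.
Lemma sum_ge2 k (F : 'I_k -> int) a b : (forall i, 0 <= F i) -> a != b ->
  F a + F b <= \sum_i F i.
Proof.
move=> H ab; rewrite (bigD1 a) //= (bigD1 b) 1?eq_sym //= addrA lerDl; exact: sumr_ge0.
Qed.
Lemma sum_ge3 k (F : 'I_k -> int) a b c : (forall i, 0 <= F i) -> a != b -> a != c -> b != c ->
  F a + F b + F c <= \sum_i F i.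
Proof.
move=> H ab ac bc; rewrite (bigD1 a) //= (bigD1 b) 1?eq_sym //= (bigD1 c) /=;
  last by rewrite eq_sym ac eq_sym bc.
rewrite !addrA lerDl; exact: sumr_ge0.
Qed.
Lemma exists_pos k (F : 'I_k -> int) : 0 < \sum_i F i -> exists i, 0 < F i.
Proof.
case: (pickP (fun i => 0 < F i)) => [i Hi | H]; first by exists i.
have : \sum_i F i <= 0 by apply: sumr_le0 => i _; rewrite leNgt H.
lia.
Qed.

Lemma minn_meet (E : finType) (A B : {set E}) : minn #|A :&: B| 1 = (A :&: B != set0).
Proof.
case: (A :&: B =P set0) => [->|/eqP H]; first by rewrite cards0.
rewrite -card_gt0 in H; rewrite /=; lia.
Qed.
Lemma meet1 (E : finType) (x : E) B : ([set x] :&: B != set0) = (x \in B).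
Proof.
apply/set0Pn/idP => [[v]|h]; first by rewrite !inE => /andP[/eqP-> //].
by exists x; rewrite !inE eqxx.
Qed.
Lemma meet2 (E : finType) (x y : E) B : ([set x; y] :&: B != set0) = (x \in B) || (y \in B).
Proof.
apply/set0Pn/orP => [[v]|[h|h]]; first by rewrite !inE => /andP[/orP[]/eqP-> ->]; auto.
  by exists x; rewrite !inE eqxx.
by exists y; rewrite !inE eqxx orbT.
Qed.
Lemma meet3 (E : finType) (x y z : E) B :
  ([set x; y; z] :&: B != set0) = [|| x \in B, y \in B | z \in B].
Proof.
apply/set0Pn/idP => [[v]|h].
  rewrite !inE => /andP[]; case/orP => [/orP[]/eqP->|/eqP->] ->; by rewrite ?orbT.
case/orP: h => [h|/orP[h|h]]; [exists x|exists y|exists z]; by rewrite !inE eqxx ?orbT.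
Qed.

Section Hyp.
Variables (E : finType) (n : nat) (X : 'I_n -> {set E}).
Hypothesis Hinter : forall i j : 'I_n, i != j -> (#|X i :&: X j| <= 1)%N.

Lemma two_common i i' x y : i != i' -> x != y -> x \in X i -> y \in X i ->
  x \in X i' -> y \in X i' -> False.
Proof.
move=> ii xy xi yi xi' yi'; have H := Hinter _ _ ii.
have : [set x; y] \subset X i :&: X i' by rewrite subUset !sub1set !inE xi yi xi' yi'.
move/subset_leq_card; rewrite cards2 xy => h; have := leq_trans h H; by [].
Qed.

Lemma rho1 x : hyp_rho X [set x] = \sum_i ((x \in X i) : nat)%:Z.
Proof. apply: eq_bigr => i _; by rewrite minn_meet meet1. Qed.

Lemma rho_pair x y : hyp_rho X [set x] + hyp_rho X [set y] - hyp_rho X [set x; y]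
  = \sum_i (((x \in X i) && (y \in X i)) : nat)%:Z.
Proof.
rewrite /hyp_rho -big_split -sumrB /=; apply: eq_bigr => i _.
by rewrite !minn_meet !meet1 meet2; case: (x \in X i); case: (y \in X i).
Qed.

Lemma c_le1 x y : x != y -> \sum_i (((x \in X i) && (y \in X i)) : nat)%:Z <= 1.
Proof.
move=> xy; case: (pickP (fun i => (x \in X i) && (y \in X i))) => [i Hi | H].
  rewrite (bigD1 i) //= big1 ?Hi // => i' Hi'.
  case E': ((x \in X i') && (y \in X i')) => //; exfalso.
  move/andP: Hi => [? ?]; move/andP: E' => [? ?]; exact: (two_common _ _ _ _ Hi' xy).
by rewrite big1 // => i _; rewrite H.
Qed.

Lemma c_ge1 x y p : x \in X p -> y \in X p ->
  1 <= \sum_i (((x \in X i) && (y \in X i)) : nat)%:Z.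
Proof.
move=> xp yp.
have := @sum_ge1 n (fun i => (((x \in X i) && (y \in X i)) : nat)%:Z) p (fun i => isT).
by rewrite /= xp yp.
Qed.

Lemma c_eq0 x y : (forall i, ~ (x \in X i /\ y \in X i)) ->
  \sum_i (((x \in X i) && (y \in X i)) : nat)%:Z = 0.
Proof.
move=> H; rewrite big1 // => i _.
by case E': ((x \in X i) && (y \in X i)) => //; case: (H i); apply/andP.
Qed.

Lemma rho_trip x y z p : x != y -> x != z -> y != z -> x \in X p -> y \in X p -> z \in X p ->
  hyp_rho X [set x] + hyp_rho X [set y] + hyp_rho X [set z] - hyp_rho X [set x; y; z] = 2.
Proof.
move=> xy xz yz xp yp zp.
rewrite /hyp_rho -!big_split -sumrB /=.
rewrite (bigD1 p) //= big1 => [|i ip].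
  by rewrite !minn_meet !meet1 meet3 xp yp zp.
rewrite !minn_meet !meet1 meet3.
case xi: (x \in X i); case yi: (y \in X i); case zi: (z \in X i) => //=; exfalso;
 first [exact: (two_common _ _ _ _ ip xy xi yi xp yp) | exact: (two_common _ _ _ _ ip xz xi zi xp zp)
       | exact: (two_common _ _ _ _ ip yz yi zi yp zp)].
Qed.
End Hyp.

Lemma main1 (E : finType) (n : nat) (X : 'I_n -> {set E})
  (Xne : forall i, X i != set0)
  (Hinter : forall i j, i != j -> (#|X i :&: X j| <= 1)%N)
  (Hcomplete : forall i j, i != j -> X i :&: X j != set0)
  (Hpair : forall p q, p != q ->
     exists a b, [/\ a \in X p, b \in X q &
                     forall i, ~ (a \in X i /\ b \in X i)])
  (sigma : {set E} -> int)
  (Hsmall : forall A, small_set X A -> sigma A = hyp_rho X A)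
  (k : nat) (M : 'I_k -> {set E} -> int)
  (HM : forall i, matroid_rank (M i))
  (Hsum : forall A, sigma A = \sum_(i < k) M i A) :
  n%:Z <= sigma [set: E].
Proof.
have sm1 x : small_set X [set x] by left; rewrite cards1.
have sm2 x y : small_set X [set x; y] by left; rewrite cards2; case: (x != y).
have S1 x : \sum_j M j [set x] = hyp_rho X [set x] by rewrite -Hsum Hsmall.
pose def j x y := M j [set x] + M j [set y] - M j [set x; y].
have S2 x y : \sum_j def j x y = \sum_i (((x \in X i) && (y \in X i)) : nat)%:Z.
  by rewrite -rho_pair /def !sumrB big_split /= -!Hsum !Hsmall.
have def0 j x y : 0 <= def j x y by have := r2 (HM j) x y; rewrite /def; glia.
pose def3 j x y z := M j [set x] + M j [set y] + M j [set z] - M j [set x; y; z].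
have S3 x y z p : x != y -> x != z -> y != z -> x \in X p -> y \in X p -> z \in X p ->
    \sum_j def3 j x y z = 2.
  move=> xy xz yz xp yp zp.
  rewrite -(@rho_trip _ _ X Hinter x y z p xy xz yz xp yp zp) /def3 !sumrB !big_split /= -!Hsum !Hsmall //.
  right; split; last by exists p; rewrite !subUset !sub1set xp yp zp.
  by rewrite setUC cardsU1 cards2 !inE xy (eq_sym z x) (eq_sym z y) (negbTE xz) (negbTE yz).
have parx j x y : 1 <= def j x y -> [/\ M j [set x] = 1, M j [set y] = 1 & M j [set x; y] <= 1].
  by move=> h; apply: (par_def (HM j)).
pose goodb j p := [forall x in X p, M j [set x] == 1] &&
                  [forall x in X p, forall y in X p, M j [set x; y] <= 1].
have clB j p q : goodb j p -> goodb j q -> p = q.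
  move=> gp gq; case: (eqVneq p q) => // pq; exfalso.
  have [a [b [ap bq nab]]] := Hpair p q pq.
  have /set0Pn [c] := Hcomplete p q pq; rewrite inE => /andP[cp cq].
  move: gp gq => /andP[/forall_inP gp1 /forall_inP gp2] /andP[/forall_inP gq1 /forall_inP gq2].
  have hc : M j [set c] = 1 by apply/eqP; apply: gp1.
  have hac : M j [set a; c] <= 1 by have /forall_inP := gp2 a ap; apply.
  have hcb : M j [set c; b] <= 1 by have /forall_inP := gq2 c cq; apply.
  have hab := par_trans (HM j) hc hac hcb.
  have ha : M j [set a] = 1 by apply/eqP; apply: gp1.
  have hb : M j [set b] = 1 by apply/eqP; apply: gq1.
  have := S2 a b; rewrite (@c_eq0 _ _ X a b nab) => hs.
  have := @sum_ge1 k (fun j => def j a b) j (fun j => def0 j a b).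
  rewrite hs /def; move: ha hb hab; glia.
have clC j p : goodb j p -> 1 <= M j [set: E].
  move=> /andP[/forall_inP g1 _]; have /set0Pn [x xp] := Xne p.
  have /eqP h := g1 x xp; have := rmono (HM j) (subsetT [set x]); move: h; glia.
have clA p : exists j, goodb j p.
  have /set0Pn [x xp] := Xne p.
  have Hx j : M j [set x] = 1 ->
      (forall z, z \in X p -> M j [set z] = 1 /\ M j [set x; z] <= 1) -> goodb j p.
    move=> hx H; apply/andP; split; apply/forall_inP => z zp.
      by have [-> _] := H z zp.
    apply/forall_inP => w wp; have [hz hxz] := H z zp; have [hw hxw] := H w wp.
    by apply: (par_trans (HM j) hx _ hxw); rewrite setUC.
  case: (pickP (fun y => (y \in X p) && (y != x))) => [y /andP[yp yx] | Hn].
    have [j hj] : exists j, 0 < def j x y.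
      by apply: exists_pos; rewrite S2; have := @c_ge1 _ _ X x y p xp yp; glia.
    have hj1 : 1 <= def j x y by move: hj; glia.
    have [hx hy hxy] := parx j x y hj1.
    have xy : x != y by rewrite eq_sym.
    exists j; apply: Hx => // z zp.
    case: (eqVneq z x) => [->|zx]; first by split => //; rewrite setUid hx.
    case: (eqVneq z y) => [->|zy]; first by split.
    case: (boolP (1 <= def j x z)) => [hd|hnd]; first by have [_ ? ?] := parx j x z hd.
    exfalso; rewrite -ltNge in hnd.
    have xz : x != z by rewrite eq_sym.
    have yz : y != z by rewrite eq_sym.
    have [i hi] : exists i, 0 < def i x z.
      by apply: exists_pos; rewrite S2; have := @c_ge1 _ _ X x z p xp zp; glia.
    have [i' hi'] : exists i, 0 < def i y z.
      by apply: exists_pos; rewrite S2; have := @c_ge1 _ _ X y z p yp zp; glia.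
    have [hix hiz hixz] : [/\ M i [set x] = 1, M i [set z] = 1 & M i [set x; z] <= 1].
      by apply: parx; move: hi; glia.
    have [hi'y hi'z hi'yz] : [/\ M i' [set y] = 1, M i' [set z] = 1 & M i' [set y; z] <= 1].
      by apply: parx; move: hi'; glia.
    have ij : i != j.
      by apply/eqP => e; rewrite e in hi; move: hi hnd; glia.
    have i'j : i' != j.
      apply/eqP => e; rewrite e in hi'y hi'z hi'yz.
      have := par_trans (HM j) hy hxy hi'yz; rewrite /def in hnd; move: hx hi'z hnd; glia.
    case: (eqVneq i i') => [e|ii'].
      rewrite -e in hi'y hi'z hi'yz.
      have hzy : M i [set z; y] <= 1 by rewrite setUC.
      have hixy := par_trans (HM i) hiz hixz hzy.
      have := @sum_ge2 k (fun j => def j x y) i j (fun j => def0 j x y) ij.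
      rewrite S2; have := @c_le1 _ _ X Hinter x y xy; have := hj1; rewrite /def => h1 h2 h3; have := le_trans h3 h2; move: h1 hix hi'y hixy; glia.
    have d3a j0 : def j0 x y <= def3 j0 x y z.
      have := tri_le (HM j0) (subxx [set x; y; z]); rewrite /def /def3; glia.
    have d3b j0 : def j0 x z <= def3 j0 x y z.
      have : [set x; y; z] \subset [set x; z] :|: [set y].
        by apply/subsetP => v; rewrite !inE => /orP[/orP[]|] ->; rewrite ?orbT.
      move/(tri_le (HM j0)); rewrite /def /def3; glia.
    have d3c j0 : def j0 y z <= def3 j0 x y z.
      have : [set x; y; z] \subset [set y; z] :|: [set x].
        by apply/subsetP => v; rewrite !inE => /orP[/orP[]|] ->; rewrite ?orbT.
      move/(tri_le (HM j0)); rewrite /def /def3; glia.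
    have d3n j0 : 0 <= def3 j0 x y z by apply: le_trans (d3a j0); apply: def0.
    have ji : j != i by rewrite eq_sym.
    have ji' : j != i' by rewrite eq_sym.
    have := @sum_ge3 k (fun j => def3 j x y z) j i i' d3n ji ji' ii'.
    rewrite (S3 x y z p xy xz yz xp yp zp).
    have := d3a j; have := d3b i; have := d3c i'; move: hj1 hi hi'; glia.
  have : 1 <= \sum_j M j [set x].
    rewrite S1 rho1.
    have := @sum_ge1 n (fun i => ((x \in X i) : nat)%:Z) p (fun i => isT).
    by rewrite /= xp.
  move=> hs; have [j hj] : exists j, 0 < M j [set x] by apply: exists_pos; move: hs; glia.
  exists j; apply: Hx; first by have := r1le (HM j) x; move: hj; glia.
  move=> z zp; have -> : z = x.
    by move: (Hn z); rewrite zp /= => /negbFE/eqP.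
  by rewrite setUid; have h := r1le (HM j) x; split; move: hj h; glia.
have H1 j : \sum_p ((goodb j p) : nat)%:Z <= M j [set: E].
  case: (pickP (goodb j)) => [p gp | Hn].
    rewrite (bigD1 p) //= gp big1 => [|q qp]; last first.
      case E': (goodb j q) => //.
      by rewrite (clB j p q gp E') eqxx in qp.
    have := clC j p gp; glia.
  by rewrite big1 => [|p _]; [exact: (rge0 (HM j)) | rewrite Hn].
have H2 : n%:Z <= \sum_j \sum_p ((goodb j p) : nat)%:Z.
  rewrite exchange_big /=.
  have -> : n%:Z = \sum_(p < n) (1 : int) by rewrite sumr_const card_ord natz.
  apply: ler_sum => p _; have [j gj] := clA p.
  have := @sum_ge1 k (fun j => (goodb j p : nat)%:Z) j (fun _ => isT).
  by rewrite /= gj.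
rewrite Hsum; apply: le_trans H2 _; apply: ler_sum => j _; exact: H1.
Qed.

Theorem theorem2p15 (E : finType) (n : nat) (X : 'I_n -> {set E})
  (Xinj : injective X)
  (Xne : forall i, X i != set0)
  (Hinter : forall i j, i != j -> (#|X i :&: X j| <= 1)%N)
  (Hcomplete : forall i j, i != j -> X i :&: X j != set0)
  (Hpair : forall p q, p != q ->
     exists a b, [/\ a \in X p, b \in X q &
                     forall i, ~ (a \in X i /\ b \in X i)]) :
  (forall sigma : {set E} -> int,
     polymatroid sigma ->
     (forall A, small_set X A -> sigma A = hyp_rho X A) ->
     sigma [set: E] < n%:Z ->
     indecomposable sigma)
  /\
  (forall s : int,
     (forall A, small_set X A -> hyp_rho X A <= s) ->
     s < n%:Z ->
     indecomposable (truncation (hyp_rho X) s)).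
Proof.
split.
  move=> sigma _ Hsmall Hlt [k [M [HM Hsum]]].
  have h := @main1 E n X Xne Hinter Hcomplete Hpair sigma Hsmall k M HM Hsum.
  by move: Hlt; rewrite ltNge h.
move=> s Hs Hsn [k [M [HM Hsum]]].
have Hsm : forall A, small_set X A -> truncation (hyp_rho X) s A = hyp_rho X A.
  by move=> A hA; rewrite /truncation min_l //; exact: Hs.
have h := @main1 E n X Xne Hinter Hcomplete Hpair _ Hsm k M HM Hsum.
have h2 : truncation (hyp_rho X) s [set: E] <= s by rewrite /truncation ge_min lexx orbT.
have := le_lt_trans (le_trans h h2) Hsn; by rewrite ltxx.
Qed.
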